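(* Under the standing assumptions of the context, for any real $a<b$, $\|\widehat{\varphi_l}-\widehat{\varphi^M}\|_{C[a,b]}=O(\mu(l))$ as $l\to\infty$, where $\|\cdot\|_{C[a,b]}$ is the sup norm on $[a,b]$.
   Context: Fourier transform: $\widehat f(\omega)=\int_{\mathbb{R}}f(t)e^{-it\omega}\,dt$. Let $\theta$ be odd, non-decreasing, $C^2$, with $\theta(\omega)=\pi/4$ for $\omega>\pi/3$; fix $\pi/3\le\omega_0<\pi/2$. Meyer scaling function: $\widehat{\varphi^M}(\omega)=1$ for $|\omega|\le2\omega_0$, $=\cos(\frac\pi4+\theta(\frac{\pi}{3(\pi-2\omega_0)}(|\omega|-\pi)))$ for $2\omega_0<|\omega|\le2\pi-2\omega_0$, $=0$ otherwise. Meyer mask: $2\pi$-periodic $m^M$ with $m^M(\omega)=\widehat{\varphi^M}(2\omega)$ on $[-\pi,\pi]$. $\|\cdot\|_C$: sup norm on $[-\pi,\pi]$. A linear method of summation $(\lambda_{n,k})$ maps $f$ with Fourier coefficients $a_k,b_k$ to $u_n(f,\omega)=\frac{a_0}2+\sum_{k=1}^n\lambda_{n,k}(a_k\cos k\omega+b_k\sin k\omega)$. $m^M_l:=m^M/(\cos\frac\omega2)^{2l}$. Standing assumptions: a method and a sequence $n(l)$ are fixed with $u_l:=u_{n(l)}(m^M_l,\cdot)$, $u_{1,l}:=u_{n(l)}((m^M_l)',\cdot)$ satisfying $\alpha(l):=\|u_l-m^M_l\|_C=o(l^{-1})$, $\gamma(l):=\|u_{1,l}-(m^M_l)'\|_C=o(1)$,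 $u_l(\pi)\ne0$; $l_0$ is fixed with $\inf_{l\ge l_0}|u_l(0)|>0$ and $l\ge l_0$. $\mu(l):=l\alpha(l)+\gamma(l)$. $m_l(\omega):=(\cos\frac\omega2)^{2l}u_l(\omega)/u_l(0)$, $\widehat{\varphi_l}(\omega):=\prod_{j\ge1}m_l(\omega2^{-j})$. *)

(* Defs.v *)
From Stdlib Require Import Reals.
From Coquelicot Require Import Coquelicot.
Open Scope R_scope.

(* Meyer scaling function (Fourier transform), parameterized by theta and omega0. *)
Definition phiM (theta : R -> R) (omega0 : R) (w : R) : R :=
  if Rle_dec (Rabs w) (2 * omega0) then 1
  else if Rle_dec (Rabs w) (2 * PI - 2 * omega0) then
    cos (PI / 4 + theta (PI / (3 * (PI - 2 * omega0)) * (Rabs w - PI)))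
  else 0.

(* reduction of w modulo 2*pi into [-pi, pi) *)
Definition red2pi (w : R) : R :=
  w - 2 * PI * (IZR (up ((w + PI) / (2 * PI))) - 1).

Definition mM (theta : R -> R) (omega0 : R) (w : R) : R :=
  phiM theta omega0 (2 * red2pi w).

(* m^M_l := m^M / (cos(w/2))^(2l)   (Rocq's x/0 = 0 convention at w = pi + 2k pi,
   where m^M vanishes anyway) *)
Definition mMl (theta : R -> R) (omega0 : R) (l : nat) (w : R) : R :=
  mM theta omega0 w / (cos (w / 2)) ^ (2 * l).

Definition fa (f : R -> R) (k : nat) : R :=
  / PI * RInt (fun t => f t * cos (INR k * t)) (- PI) PI.
Definition fb (f : R -> R) (k : nat) : R :=
  / PI * RInt (fun t => f t * sin (INR k * t)) (- PI) PI.

Definition usum (lam : nat -> nat -> R) (n : nat) (f : R -> R) (w : R) : R :=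
  fa f 0 / 2 +
  sum_n_m (fun k => lam n k * (fa f k * cos (INR k * w) + fb f k * sin (INR k * w))) 1 n.

Definition supnorm (a b : R) (f : R -> R) : R :=
  real (Lub_Rbar (fun y => exists x, a <= x <= b /\ y = Rabs (f x))).

Definition ul theta omega0 lam (nl : nat -> nat) (l : nat) : R -> R :=
  usum lam (nl l) (mMl theta omega0 l).
Definition u1l theta omega0 lam (nl : nat -> nat) (l : nat) : R -> R :=
  usum lam (nl l) (Derive (mMl theta omega0 l)).

Definition alpha theta omega0 lam nl (l : nat) : R :=
  supnorm (- PI) PI (fun w => ul theta omega0 lam nl l w - mMl theta omega0 l w).
Definition gamma theta omega0 lam nl (l : nat) : R :=
  supnorm (- PI) PI (fun w => u1l theta omega0 lam nl l w - Derive (mMl theta omega0 l) w).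
Definition mu theta omega0 lam nl (l : nat) : R :=
  INR l * alpha theta omega0 lam nl l + gamma theta omega0 lam nl l.

Definition ml theta omega0 lam nl (l : nat) (w : R) : R :=
  (cos (w / 2)) ^ (2 * l) * ul theta omega0 lam nl l w / ul theta omega0 lam nl l 0.

Fixpoint pprod (g : nat -> R) (N : nat) : R :=
  match N with O => 1 | S N' => pprod g N' * g N end.

Definition phil theta omega0 lam nl (l : nat) (w : R) : R :=
  real (Lim_seq (fun N => pprod (fun j => ml theta omega0 lam nl l (w / 2 ^ j)) N)).

(* Main.v *)
Require Import Defs.
From Stdlib Require Import Reals Lra Lia ZArith.
From Coquelicot Require Import Coquelicot.
Open Scope R_scope.

Lemma cont_pt_eps (f : R -> R) x : (forall y, ex_derive f y) ->
  forall eps, 0 < eps -> exists d, 0 < d /\ forall y, Rabs (y - x) < d -> Rabs (f y - f x) < eps.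
Proof.
  intros Hd eps He.
  assert (Hc : continuity_pt f x).
  { apply continuity_pt_filterlim. apply (ex_derive_continuous (V:=R_NormedModule)). apply Hd. }
  destruct (Hc eps He) as [d [Hd0 Hd1]].
  exists d; split; auto. intros y Hy.
  destruct (Req_dec y x) as [->|Hne]. rewrite Rminus_eq_0, Rabs_R0; auto.
  apply (Hd1 y). split. split. exact I. auto. simpl. unfold R_dist. auto.
Qed.

Lemma th_hi (theta : R -> R) (Hd1 : forall x, ex_derive theta x)
  (Hflat : forall x, x > PI / 3 -> theta x = PI / 4) :
  forall x, x >= PI / 3 -> theta x = PI / 4.
Proof.
  intros x Hx. destruct (Rgt_dec x (PI/3)) as [h|h]. auto.
  assert (x = PI/3) by lra. subst x.
  destruct (Req_dec (theta (PI/3)) (PI/4)) as [e|ne]; auto.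
  destruct (cont_pt_eps theta (PI/3) Hd1 (Rabs (theta (PI/3) - PI/4))) as [d [d0 Hd]].
  apply Rabs_pos_lt. lra.
  specialize (Hd (PI/3 + d/2)). rewrite Hflat in Hd by lra.
  rewrite (Rabs_minus_sym (PI/4)) in Hd.
  assert (Rabs (PI/3 + d/2 - PI/3) < d). rewrite Rabs_pos_eq; lra.
  specialize (Hd H). lra.
Qed.

Lemma th_lo (theta : R -> R) (Hodd : forall x, theta (- x) = - theta x) (Hd1 : forall x, ex_derive theta x)
  (Hflat : forall x, x > PI / 3 -> theta x = PI / 4) :
  forall x, x <= - (PI / 3) -> theta x = - (PI / 4).
Proof.
  intros x Hx. replace x with (- - x) by ring. rewrite Hodd, (th_hi theta Hd1 Hflat); lra.
Qed.
Definition thgood (theta : R -> R) := (forall x, theta (-x) = - theta x) /\ (forall x, ex_derive theta x) /\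
   (forall x, ex_derive (Derive theta) x) /\ (forall x, x > PI/3 -> theta x = PI/4).
Definition w0good (omega0 : R) := PI/3 <= omega0 < PI/2.
Definition kap (omega0 : R) := PI / (3 * (PI - 2 * omega0)).

Lemma kap_facts omega0 : w0good omega0 ->
  kap omega0 * (2 * omega0 - PI) = - (PI/3) /\ kap omega0 * (PI - 2 * omega0) = PI/3 /\ 1 <= kap omega0.
Proof.
  unfold w0good, kap; intros H. pose proof PI_RGT_0.
  assert (0 < PI - 2*omega0) by lra.
  split; [field; lra|split; [field; lra|]].
  apply Rmult_le_reg_r with (3 * (PI - 2*omega0)). lra.
  unfold Rdiv. rewrite Rmult_assoc, Rinv_l by lra. lra.
Qed.

Lemma thg_hi theta : thgood theta -> forall x, x >= PI/3 -> theta x = PI/4.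
Proof. intros (H1&H2&H3&H4). apply th_hi; auto. Qed.
Lemma thg_lo theta : thgood theta -> forall x, x <= -(PI/3) -> theta x = -(PI/4).
Proof. intros (H1&H2&H3&H4). apply th_lo; auto. Qed.

Lemma cos_pi2_plus y : cos (PI/2 + y) = - sin y.
Proof. rewrite sin_cos. ring. Qed.

Lemma phiM_formula theta omega0 : thgood theta -> w0good omega0 -> forall w,
  phiM theta omega0 w = cos (PI/4 + theta (kap omega0 * (Rabs w - PI))).
Proof.
  intros Ht Hw w. destruct (kap_facts omega0 Hw) as (k1&k2&k3). pose proof PI_RGT_0.
  unfold phiM, w0good in *. fold (kap omega0).
  destruct (Rle_dec (Rabs w) (2*omega0)).
  - rewrite (thg_lo theta Ht). replace (PI/4 + -(PI/4)) with 0 by ring. now rewrite cos_0.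
    rewrite <- k1. apply Rmult_le_compat_l; lra.
  - destruct (Rle_dec (Rabs w) (2*PI - 2*omega0)). auto.
    rewrite (thg_hi theta Ht). replace (PI/4 + PI/4) with (PI/2) by field. now rewrite cos_PI2.
    rewrite <- k2. apply Rle_ge, Rmult_le_compat_l; lra.
Qed.

Lemma phiM_smooth theta omega0 : thgood theta -> w0good omega0 -> forall w,
  phiM theta omega0 w = - sin (theta (kap omega0 * (w - PI)) + theta (kap omega0 * (- w - PI))).
Proof.
  intros Ht Hw w. destruct (kap_facts omega0 Hw) as (k1&k2&k3). pose proof PI_RGT_0.
  rewrite phiM_formula by auto.
  assert (Hk : 0 < kap omega0) by lra.
  destruct (Rle_dec 0 w).
  - rewrite Rabs_pos_eq by auto. rewrite (thg_lo theta Ht (kap omega0 * (-w - PI))).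
    rewrite <- cos_pi2_plus. f_equal. field.
    apply Rle_trans with (kap omega0 * (-PI)). apply Rmult_le_compat_l; lra.
    assert (kap omega0 * PI >= PI) by nra. lra.
  - rewrite Rabs_left by lra. rewrite (thg_lo theta Ht (kap omega0 * (w - PI))).
    rewrite <- cos_pi2_plus. f_equal. field.
    apply Rle_trans with (kap omega0 * (-PI)). apply Rmult_le_compat_l; lra.
    assert (kap omega0 * PI >= PI) by nra. lra.
Qed.

Lemma phiM_one theta omega0 w : Rabs w <= 2 * omega0 -> phiM theta omega0 w = 1.
Proof. intros H. unfold phiM. destruct (Rle_dec (Rabs w) (2*omega0)); tauto. Qed.

Lemma phiM_zero theta omega0 : thgood theta -> w0good omega0 -> forall w,
  Rabs w >= 2 * PI - 2 * omega0 -> phiM theta omega0 w = 0.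
Proof.
  intros Ht Hw w H. destruct (kap_facts omega0 Hw) as (k1&k2&k3). rewrite phiM_formula by auto.
  rewrite (thg_hi theta Ht). replace (PI/4 + PI/4) with (PI/2) by field. now rewrite cos_PI2.
  rewrite <- k2. apply Rle_ge, Rmult_le_compat_l; lra.
Qed.

Lemma phiM_bnd theta omega0 : thgood theta -> w0good omega0 -> forall w, Rabs (phiM theta omega0 w) <= 1.
Proof.
  intros Ht Hw w. rewrite phiM_formula by auto. apply Rabs_le. apply COS_bound.
Qed.

Lemma up_val r z : IZR z - 1 <= r < IZR z -> up r = z.
Proof. intros H. symmetry. apply tech_up; lra. Qed.

Lemma red_in w : -PI <= w < PI -> red2pi w = w.
Proof.
  intros H. pose proof PI_RGT_0. unfold red2pi.
  rewrite (up_val _ 1). simpl. ring.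
  split. apply Rmult_le_reg_r with (2*PI). lra. unfold Rdiv. rewrite Rmult_assoc, Rinv_l by lra. lra.
  apply Rmult_lt_reg_r with (2*PI). lra. unfold Rdiv. rewrite Rmult_assoc, Rinv_l by lra. lra.
Qed.

Lemma red_hi w : PI <= w < 3 * PI -> red2pi w = w - 2 * PI.
Proof.
  intros H. pose proof PI_RGT_0. unfold red2pi.
  rewrite (up_val _ 2). simpl. ring.
  split. apply Rmult_le_reg_r with (2*PI). lra. unfold Rdiv. rewrite Rmult_assoc, Rinv_l by lra. simpl; lra.
  apply Rmult_lt_reg_r with (2*PI). lra. unfold Rdiv. rewrite Rmult_assoc, Rinv_l by lra. simpl; lra.
Qed.

Lemma red_lo w : -3 * PI <= w < - PI -> red2pi w = w + 2 * PI.
Proof.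
  intros H. pose proof PI_RGT_0. unfold red2pi.
  rewrite (up_val _ 0). simpl. ring.
  split. apply Rmult_le_reg_r with (2*PI). lra. unfold Rdiv. rewrite Rmult_assoc, Rinv_l by lra. simpl; lra.
  apply Rmult_lt_reg_r with (2*PI). lra. unfold Rdiv. rewrite Rmult_assoc, Rinv_l by lra. simpl; lra.
Qed.

Lemma red_range w : -PI <= red2pi w < PI.
Proof.
  pose proof PI_RGT_0. unfold red2pi. set (r := (w + PI) / (2*PI)).
  destruct (archimed r) as [h1 h2].
  assert (w + PI = 2 * PI * r) by (unfold r; field; lra).
  split; nra.
Qed.

Lemma red_dec w : exists z : Z, w = red2pi w + 2 * PI * IZR z.
Proof.
  exists (up ((w + PI) / (2 * PI)) - 1)%Z. unfold red2pi. rewrite minus_IZR. simpl. ring.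
Qed.

Lemma red_idem w : red2pi (red2pi w) = red2pi w.
Proof. apply red_in, red_range. Qed.

Lemma cos_Z x z : cos (x + 2 * PI * IZR z) = cos x.
Proof.
  destruct (Z_le_dec 0 z).
  - rewrite <- (Z2Nat.id z) by auto. rewrite <- INR_IZR_INZ.
    replace (2 * PI * INR (Z.to_nat z)) with (2 * INR (Z.to_nat z) * PI) by ring. apply cos_period.
  - replace z with (- (Z.of_nat (Z.to_nat (- z))))%Z by lia. rewrite opp_IZR, <- INR_IZR_INZ.
    rewrite <- (cos_period (x + 2 * PI * - INR (Z.to_nat (- z))) (Z.to_nat (-z))). f_equal. ring.
Qed.

Lemma sin_Z x z : sin (x + 2 * PI * IZR z) = sin x.
Proof.
  destruct (Z_le_dec 0 z).
  - rewrite <- (Z2Nat.id z) by auto. rewrite <- INR_IZR_INZ.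
    replace (2 * PI * INR (Z.to_nat z)) with (2 * INR (Z.to_nat z) * PI) by ring. apply sin_period.
  - replace z with (- (Z.of_nat (Z.to_nat (- z))))%Z by lia. rewrite opp_IZR, <- INR_IZR_INZ.
    rewrite <- (sin_period (x + 2 * PI * - INR (Z.to_nat (- z))) (Z.to_nat (-z))). f_equal. ring.
Qed.

Lemma mM_red theta omega0 w : mM theta omega0 (red2pi w) = mM theta omega0 w.
Proof. unfold mM. now rewrite red_idem. Qed.

Lemma mM_eq theta omega0 y : -PI <= y < PI -> mM theta omega0 y = phiM theta omega0 (2 * y).
Proof. intros H. unfold mM. now rewrite red_in. Qed.

Lemma mM_bnd theta omega0 : thgood theta -> w0good omega0 -> forall y, Rabs (mM theta omega0 y) <= 1.
Proof. intros. apply phiM_bnd; auto. Qed.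

Lemma mM_one theta omega0 : w0good omega0 -> forall y, Rabs y <= omega0 -> mM theta omega0 y = 1.
Proof.
  intros Hw y H. unfold w0good in Hw. pose proof PI_RGT_0.
  apply Rabs_le_between in H.
  rewrite mM_eq by lra. apply phiM_one. apply Rabs_le. lra.
Qed.

Lemma mM_zero theta omega0 : thgood theta -> w0good omega0 -> forall y,
  PI - omega0 < Rabs y < PI + omega0 -> mM theta omega0 y = 0.
Proof.
  intros Ht Hw y H. pose proof Hw as Hw'. unfold w0good in Hw. pose proof PI_RGT_0.
  destruct (Rle_dec 0 y).
  - rewrite Rabs_pos_eq in H by auto.
    destruct (Rlt_dec y PI).
    + rewrite mM_eq by lra. apply phiM_zero; auto. rewrite Rabs_pos_eq; lra.
    + rewrite <- mM_red, red_hi by lra. rewrite mM_eq by lra. apply phiM_zero; auto.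
      rewrite Rabs_left1; lra.
  - rewrite Rabs_left in H by lra.
    destruct (Rle_dec (-PI) y).
    + rewrite mM_eq by lra. apply phiM_zero; auto. rewrite Rabs_left; lra.
    + rewrite <- mM_red, red_lo by lra. rewrite mM_eq by lra. apply phiM_zero; auto.
      rewrite Rabs_pos_eq; lra.
Qed.

Lemma mM_zero_gen theta omega0 : thgood theta -> w0good omega0 -> forall y,
  2 * omega0 < Rabs y < 2 * PI - 2 * omega0 -> mM theta omega0 y = 0.
Proof.
  intros Ht Hw y H. pose proof Hw as Hw'. unfold w0good in Hw. pose proof PI_RGT_0.
  destruct (Rle_dec 0 y).
  - rewrite Rabs_pos_eq in H by auto.
    destruct (Rlt_dec y PI).
    + rewrite mM_eq by lra. apply phiM_zero; auto. rewrite Rabs_pos_eq; lra.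
    + rewrite <- mM_red, red_hi by lra. rewrite mM_eq by lra. apply phiM_zero; auto.
      rewrite Rabs_left1; lra.
  - rewrite Rabs_left in H by lra.
    destruct (Rle_dec (-PI) y).
    + rewrite mM_eq by lra. apply phiM_zero; auto. rewrite Rabs_left; lra.
    + rewrite <- mM_red, red_lo by lra. rewrite mM_eq by lra. apply phiM_zero; auto.
      rewrite Rabs_pos_eq; lra.
Qed.

Lemma two_scale theta omega0 : thgood theta -> w0good omega0 -> forall x,
  phiM theta omega0 x = mM theta omega0 (x/2) * phiM theta omega0 (x/2).
Proof.
  intros Ht Hw x. pose proof Hw as Hw'. unfold w0good in Hw. pose proof PI_RGT_0.
  destruct (Rle_dec (Rabs x) (4 * omega0)).
  - rewrite (phiM_one _ _ (x/2)). rewrite mM_eq. rewrite Rmult_1_r. f_equal. field.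
    apply Rabs_le_between in r. lra.
    rewrite Rabs_div by lra. rewrite (Rabs_pos_eq 2) by lra. lra.
  - rewrite phiM_zero by (auto; lra).
    destruct (Rle_dec (2*PI - 2*omega0) (Rabs (x/2))).
    + rewrite (phiM_zero _ _ Ht Hw' (x/2)) by lra. ring.
    + assert (Hy : Rabs (x/2) = Rabs x / 2) by (rewrite Rabs_div, (Rabs_pos_eq 2); lra).
      rewrite (mM_zero_gen theta omega0 Ht Hw' (x/2)). ring. lra.
Qed.

Lemma phiM_prod theta omega0 : thgood theta -> w0good omega0 -> forall w N,
  phiM theta omega0 w = pprod (fun j => mM theta omega0 (w / 2 ^ j)) N * phiM theta omega0 (w / 2 ^ N).
Proof.
  intros Ht Hw w N. induction N.
  - cbn [pprod pow]. rewrite Rdiv_1_r. ring.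
  - rewrite IHN. simpl pprod. rewrite (two_scale _ _ Ht Hw (w / 2^N)).
    replace (w / 2^N / 2) with (w / 2 ^ S N). rewrite <- (tech_pow_Rmult 2 N). ring.
    rewrite <- tech_pow_Rmult. field. apply pow_nonzero; lra.
Qed.

Lemma pow2_pos N : 0 < 2 ^ N.
Proof. apply pow_lt; lra. Qed.

Lemma phiM_prod_eq theta omega0 : thgood theta -> w0good omega0 -> forall w N,
  Rabs w <= 2 * omega0 * 2 ^ N ->
  pprod (fun j => mM theta omega0 (w / 2 ^ j)) N = phiM theta omega0 w.
Proof.
  intros Ht Hw w N H. rewrite (phiM_prod _ _ Ht Hw w N). rewrite phiM_one. ring.
  pose proof (pow2_pos N).
  rewrite Rabs_div, (Rabs_pos_eq (2^N)) by lra.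
  apply Rmult_le_reg_r with (2^N). lra. unfold Rdiv. rewrite Rmult_assoc, Rinv_l; lra.
Qed.

Lemma ball_R (x e y : R) : ball x e y <-> Rabs (y - x) < e.
Proof. unfold ball; simpl; unfold AbsRing_ball, abs, minus, plus, opp; simpl. unfold Rminus. tauto. Qed.

Lemma loc_C1 (f h h1 : R -> R) y eps : 0 < eps ->
  (forall z, Rabs (z - y) < eps -> f z = h z) ->
  (forall z, Rabs (z - y) < eps -> is_derive h z (h1 z)) -> continuous h1 y ->
  is_derive f y (h1 y) /\ continuous (Derive f) y.
Proof.
  intros He Heq Hd Hc.
  assert (Hz : forall z, Rabs (z - y) < eps -> is_derive f z (h1 z)).
  { intros z Hz. apply is_derive_ext_loc with h.
    assert (Hp : 0 < eps - Rabs (z - y)) by lra. exists (mkposreal _ Hp). intros t Ht. pose proof (proj1 (ball_R _ _ _) Ht) as Ht'. simpl in Ht'.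
    symmetry. apply Heq.
    replace (t - y) with ((t - z) + (z - y)) by ring.
    eapply Rle_lt_trans. apply Rabs_triang. lra.
    apply Hd; auto. }
  split. apply Hz. rewrite Rminus_eq_0, Rabs_R0; auto.
  apply continuous_ext_loc with h1; auto.
  exists (mkposreal eps He). intros t Ht. pose proof (proj1 (ball_R _ _ _) Ht) as Ht'. simpl in Ht'.
  symmetry. apply is_derive_unique. auto.
Qed.

Definition gM (theta : R -> R) omega0 (l : nat) y :=
  - sin (theta (kap omega0 * (2*y - PI)) + theta (kap omega0 * (- (2*y) - PI))) / cos (y/2) ^ (2*l).

Definition gM1 (theta : R -> R) omega0 (l : nat) y :=
  let k := kap omega0 in
  let s := theta (k * (2*y - PI)) + theta (k * (- (2*y) - PI)) in
  let s1 := 2 * k * Derive theta (k * (2*y - PI)) - 2 * k * Derive theta (k * (- (2*y) - PI)) in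
  let C := cos (y/2) ^ (2*l) in
  let C1 := - (INR (2*l) * cos (y/2) ^ (pred (2*l)) * sin (y/2) / 2) in
  (- cos s * s1 * C + sin s * C1) / (C * C).

Lemma gM_derive theta omega0 l y : (forall x, ex_derive theta x) -> cos (y/2) <> 0 ->
  is_derive (gM theta omega0 l) y (gM1 theta omega0 l y).
Proof.
  intros Hd Hc. unfold gM, gM1. auto_derive.
  repeat split; auto. replace (l + (l+0))%nat with (2*l)%nat by lia. unfold Rdiv. apply pow_nonzero. auto.
  replace (l + (l+0))%nat with (2*l)%nat by lia. unfold Rdiv, Rminus.
  change (Derive (fun x => theta x)) with (Derive theta). field. apply pow_nonzero. auto.
Qed.

Lemma gM1_cont theta omega0 l y : (forall x, ex_derive theta x) -> (forall x, ex_derive (Derive theta) x) ->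
  cos (y/2) <> 0 -> continuous (gM1 theta omega0 l) y.
Proof.
  intros Hd Hd2 Hc. apply (ex_derive_continuous (V:=R_NormedModule)). unfold gM1. auto_derive.
  repeat split; auto. unfold Rdiv. apply Rmult_integral_contrapositive; split; apply pow_nonzero; auto.
Qed.

Lemma M_eq_gM theta omega0 l : thgood theta -> w0good omega0 -> forall y, Rabs y < PI ->
  mMl theta omega0 l y = gM theta omega0 l y.
Proof.
  intros Ht Hw y Hy. unfold mMl, gM. apply Rabs_def2 in Hy.
  rewrite mM_eq by lra. rewrite phiM_smooth by auto. reflexivity.
Qed.

Lemma M_zero theta omega0 l : thgood theta -> w0good omega0 -> forall y,
  PI - omega0 < Rabs y < PI + omega0 -> mMl theta omega0 l y = 0.
Proof. intros Ht Hw y Hy. unfold mMl. rewrite mM_zero by auto. unfold Rdiv; ring. Qed.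

Lemma M_C1 theta omega0 l : thgood theta -> w0good omega0 -> forall y, -PI <= y <= PI ->
  is_derive (mMl theta omega0 l) y (Derive (mMl theta omega0 l) y) /\
  continuous (Derive (mMl theta omega0 l)) y.
Proof.
  intros Ht Hw y Hy. pose proof Ht as (H1&H2&H3&H4). pose proof Hw as Hw'. unfold w0good in Hw'.
  pose proof PI_RGT_0.
  destruct (Rlt_dec (Rabs y) (PI - omega0/2)).
  - destruct (loc_C1 (mMl theta omega0 l) (gM theta omega0 l) (gM1 theta omega0 l) y (PI - omega0/2 - Rabs y))
      as [A B].
    + lra.
    + intros z Hz. apply M_eq_gM; auto.
      assert (Rabs z <= Rabs (z - y) + Rabs y) by (replace z with ((z - y) + y) at 1 by ring; apply Rabs_triang).
      lra.
    + intros z Hz. apply gM_derive; auto.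
      assert (Rabs z <= Rabs (z - y) + Rabs y) by (replace z with ((z - y) + y) at 1 by ring; apply Rabs_triang).
      assert (Hz' : Rabs z < PI) by lra. apply Rabs_def2 in Hz'.
      apply Rgt_not_eq, cos_gt_0; lra.
    + apply gM1_cont; auto. assert (Hz' : Rabs y < PI) by lra. apply Rabs_def2 in Hz'.
      apply Rgt_not_eq, cos_gt_0; lra.
    + split; auto. rewrite (is_derive_unique _ _ _ A). auto.
  - apply Rnot_lt_le in n. destruct (loc_C1 (mMl theta omega0 l) (fun _ => 0) (fun _ => 0) y (omega0/2)) as [A B].
    + lra.
    + intros z Hz. apply M_zero; auto.
      assert (Rabs z <= Rabs (z - y) + Rabs y) by (replace z with ((z - y) + y) at 1 by ring; apply Rabs_triang).
      assert (Rabs y <= Rabs (y - z) + Rabs z) by (replace y with ((y - z) + z) at 1 by ring; apply Rabs_triang).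
      rewrite Rabs_minus_sym in Hz.
      assert (Rabs y <= PI) by (apply Rabs_le; lra). rewrite (Rabs_minus_sym z y) in H0. lra.
    + intros z Hz. apply (is_derive_const (K:=R_AbsRing) (V:=R_NormedModule)).
    + apply continuous_const.
    + split; auto. rewrite (is_derive_unique _ _ _ A). auto.
Qed.

Definition C1on (f df : R -> R) := forall t, -PI <= t <= PI -> is_derive f t (df t) /\ continuous df t.

Lemma C1on_cont f df : C1on f df -> forall t, -PI <= t <= PI -> continuous f t.
Proof. intros H t Ht. apply (ex_derive_continuous (V:=R_NormedModule)). exists (df t). apply H; auto. Qed.

Lemma ibp_gen f df (c s : R -> R) dc : C1on f df ->
  (forall t, is_derive c t (dc t)) -> (forall t, continuous dc t) ->
  f (-PI) = 0 -> f PI = 0 ->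
  RInt (fun t => df t * c t) (-PI) PI = - RInt (fun t => f t * dc t) (-PI) PI.
Proof.
  intros Hf Hc Hdc H0 H1. pose proof PI_RGT_0.
  assert (Hmm : forall t, Rmin (-PI) PI <= t <= Rmax (-PI) PI -> -PI <= t <= PI).
  { intros t. rewrite Rmin_left, Rmax_right by lra. auto. }
  assert (Hcc : forall t, continuous c t).
  { intros t. apply (ex_derive_continuous (V:=R_NormedModule)). exists (dc t). auto. }
  assert (A : is_RInt (fun t => df t * c t + f t * dc t) (-PI) PI 0).
  { replace 0 with (minus (f PI * c PI) (f (-PI) * c (-PI))).
    apply (is_RInt_derive (fun t => f t * c t)).
    - intros t Ht. apply Hmm in Ht. apply (is_derive_mult (K:=R_AbsRing)).
      apply Hf; auto. apply Hc. intros; simpl; unfold mult; simpl; ring.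
    - intros t Ht. apply Hmm in Ht. apply (continuous_plus (V:=R_NormedModule)).
      apply (continuous_mult (K:=R_AbsRing)). apply Hf; auto. apply Hcc.
      apply (continuous_mult (K:=R_AbsRing)). eapply C1on_cont; eauto. apply Hdc.
    - rewrite H0, H1. unfold minus, plus, opp; simpl. ring. }
  assert (B : ex_RInt (fun t => f t * dc t) (-PI) PI).
  { apply (ex_RInt_continuous (V:=R_CompleteNormedModule)). intros t Ht. apply Hmm in Ht.
    apply (continuous_mult (K:=R_AbsRing)). eapply C1on_cont; eauto. apply Hdc. }
  apply (RInt_correct (V:=R_CompleteNormedModule)) in B.
  assert (C := is_RInt_minus _ _ _ _ _ _ A B).
  assert (D : is_RInt (fun t => df t * c t) (-PI) PI (minus 0 (RInt (fun t => f t * dc t) (-PI) PI))).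
  { eapply is_RInt_ext; [|apply C]. intros t _. unfold minus, plus, opp; simpl. ring. }
  rewrite (is_RInt_unique _ _ _ _ D). unfold minus, plus, opp; simpl. ring.
Qed.

Lemma ex_RInt_mul_cont f (g : R -> R) : (forall t, -PI <= t <= PI -> continuous f t) -> (forall t, continuous g t) ->
  ex_RInt (fun t => f t * g t) (-PI) PI.
Proof.
  intros Hf Hg. pose proof PI_RGT_0. apply (ex_RInt_continuous (V:=R_CompleteNormedModule)).
  intros t Ht. rewrite Rmin_left, Rmax_right in Ht by lra.
  apply (continuous_mult (K:=R_AbsRing)); auto.
Qed.

Lemma cont_cos_k (k : R) t : continuous (fun t => cos (k * t)) t.
Proof. apply (ex_derive_continuous (V:=R_NormedModule)). auto_derive. auto. Qed.
Lemma cont_sin_k (k : R) t : continuous (fun t => sin (k * t)) t.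
Proof. apply (ex_derive_continuous (V:=R_NormedModule)). auto_derive. auto. Qed.

Lemma fa_deriv f df k : C1on f df -> f (-PI) = 0 -> f PI = 0 -> fa df k = INR k * fb f k.
Proof.
  intros Hf H0 H1. unfold fa, fb.
  rewrite (ibp_gen f df (fun t => cos (INR k * t)) (fun t => sin (INR k * t)) (fun t => - INR k * sin (INR k * t))); auto.
  - rewrite (RInt_ext (fun t => f t * (- INR k * sin (INR k * t))) (fun t => scal (- INR k) (f t * sin (INR k * t)))).
    rewrite (RInt_scal (V:=R_CompleteNormedModule)). unfold scal; simpl; unfold mult; simpl. ring.
    apply ex_RInt_mul_cont. eapply C1on_cont; eauto. intros; apply cont_sin_k.
    intros; unfold scal; simpl; unfold mult; simpl; ring.
  - intros t. auto_derive; auto. ring.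
  - intros t. apply (continuous_mult (K:=R_AbsRing) (fun _ => - INR k)). apply continuous_const. apply cont_sin_k.
Qed.

Lemma fb_deriv f df k : C1on f df -> f (-PI) = 0 -> f PI = 0 -> fb df k = - INR k * fa f k.
Proof.
  intros Hf H0 H1. unfold fa, fb.
  rewrite (ibp_gen f df (fun t => sin (INR k * t)) (fun t => sin (INR k * t)) (fun t => INR k * cos (INR k * t))); auto.
  - rewrite (RInt_ext (fun t => f t * (INR k * cos (INR k * t))) (fun t => scal (INR k) (f t * cos (INR k * t)))).
    rewrite (RInt_scal (V:=R_CompleteNormedModule)). unfold scal; simpl; unfold mult; simpl. ring.
    apply ex_RInt_mul_cont. eapply C1on_cont; eauto. intros; apply cont_cos_k.
    intros; unfold scal; simpl; unfold mult; simpl; ring.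
  - intros t. auto_derive; auto. ring.
  - intros t. apply (continuous_mult (K:=R_AbsRing) (fun _ => INR k)). apply continuous_const. apply cont_cos_k.
Qed.

Lemma is_derive_sum1 (h : nat -> R -> R) (dh : nat -> R) w n :
  (forall k, is_derive (h k) w (dh k)) ->
  is_derive (fun x => sum_n_m (fun k => h k x) 1 n) w (sum_n_m dh 1 n).
Proof.
  intros Hd. induction n.
  - rewrite (sum_n_m_zero (G:=R_AbelianMonoid)) by lia.
    apply (is_derive_ext (fun _ => zero)). intros t. rewrite (sum_n_m_zero (G:=R_AbelianMonoid)) by lia. auto.
    apply (is_derive_const (K:=R_AbsRing) (V:=R_NormedModule)).
  - rewrite (sum_n_Sm (G:=R_AbelianMonoid)) by lia.
    apply (is_derive_ext (fun x => plus (sum_n_m (fun k => h k x) 1 n) (h (S n) x))).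
    intros t. rewrite (sum_n_Sm (G:=R_AbelianMonoid)) by lia. auto.
    apply (is_derive_plus (K:=R_AbsRing) (V:=R_NormedModule)); auto.
Qed.

Lemma usum_deriv lam n f w :
  is_derive (usum lam n f) w
    (sum_n_m (fun k => lam n k * (fa f k * (- INR k * sin (INR k * w)) + fb f k * (INR k * cos (INR k * w)))) 1 n).
Proof.
  unfold usum.
  apply (is_derive_ext (fun x => plus (fa f 0 / 2) (sum_n_m (fun k => lam n k * (fa f k * cos (INR k * x) + fb f k * sin (INR k * x))) 1 n))).
  intros; reflexivity.
  replace (sum_n_m _ 1 n) with (plus zero (sum_n_m (fun k => lam n k * (fa f k * (- INR k * sin (INR k * w)) + fb f k * (INR k * cos (INR k * w)))) 1 n)).
  apply (is_derive_plus (K:=R_AbsRing) (V:=R_NormedModule)).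
  apply (is_derive_const (K:=R_AbsRing) (V:=R_NormedModule)).
  apply (is_derive_sum1 (fun k x => lam n k * (fa f k * cos (INR k * x) + fb f k * sin (INR k * x)))).
  intros k. auto_derive; auto. ring.
  apply (plus_zero_l (G:=R_AbelianMonoid)).
Qed.

Lemma usum_deriv_eq lam n f df w : C1on f df -> f (-PI) = 0 -> f PI = 0 ->
  is_derive (usum lam n f) w (usum lam n df w).
Proof.
  intros Hf H0 H1.
  replace (usum lam n df w) with (sum_n_m (fun k => lam n k * (fa f k * (- INR k * sin (INR k * w)) + fb f k * (INR k * cos (INR k * w)))) 1 n).
  apply usum_deriv. symmetry.
  unfold usum. rewrite (fa_deriv f df 0) by auto. simpl INR.
  replace (0 * fb f 0 / 2) with 0 by field. rewrite Rplus_0_l.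
  apply (sum_n_m_ext (G:=R_AbelianMonoid)). intros k.
  rewrite (fa_deriv f df k), (fb_deriv f df k) by auto. simpl. ring_simplify. reflexivity.
Qed.

Lemma cont_bounded (f : R -> R) a b : a <= b -> (forall t, a <= t <= b -> continuous f t) ->
  exists K, forall t, a <= t <= b -> Rabs (f t) <= K.
Proof.
  intros Hab Hc. destruct (continuity_ab_maj (fun t => Rabs (f t)) a b Hab) as [m [Hm _]].
  intros t Ht. apply continuity_pt_filterlim. apply continuous_Rabs_comp. auto.
  exists (Rabs (f m)). auto.
Qed.

Lemma supnorm_ge a b f x : a <= x <= b -> (exists K, forall y, a <= y <= b -> Rabs (f y) <= K) ->
  Rabs (f x) <= supnorm a b f.
Proof.
  intros Hx [K HK]. unfold supnorm.
  destruct (Lub_Rbar_correct (fun y => exists x, a <= x <= b /\ y = Rabs (f x))) as [Hub Hl].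
  assert (H1 : Rbar_le (Rabs (f x)) (Lub_Rbar (fun y => exists x, a <= x <= b /\ y = Rabs (f x)))).
  { apply Hub. exists x; auto. }
  assert (H2 : Rbar_le (Lub_Rbar (fun y => exists x, a <= x <= b /\ y = Rabs (f x))) K).
  { apply Hl. intros y [z [Hz ->]]. simpl. auto. }
  destruct (Lub_Rbar _); simpl in *; auto; tauto.
Qed.

Lemma supnorm_nonneg a b f : a <= b -> 0 <= supnorm a b f.
Proof.
  intros Hab. unfold supnorm.
  destruct (Lub_Rbar_correct (fun y => exists x, a <= x <= b /\ y = Rabs (f x))) as [Hub Hl].
  assert (H1 : Rbar_le (Rabs (f a)) (Lub_Rbar (fun y => exists x, a <= x <= b /\ y = Rabs (f x)))).
  { apply Hub. exists a; split; auto; lra. }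
  destruct (Lub_Rbar _); simpl in *; try lra; try tauto.
  pose proof (Rabs_pos (f a)); lra.
Qed.

Lemma M_pi theta omega0 l : thgood theta -> w0good omega0 ->
  mMl theta omega0 l PI = 0 /\ mMl theta omega0 l (-PI) = 0.
Proof.
  intros Ht Hw. pose proof PI_RGT_0. unfold w0good in Hw. unfold mMl.
  split.
  - rewrite <- mM_red, red_hi by lra. rewrite mM_eq by lra. rewrite phiM_zero; auto.
    unfold Rdiv; ring. rewrite Rabs_left; lra.
  - rewrite mM_eq by lra. rewrite phiM_zero; auto.
    unfold Rdiv; ring. rewrite Rabs_left; lra.
Qed.

Lemma M_C1on theta omega0 l : thgood theta -> w0good omega0 ->
  C1on (mMl theta omega0 l) (Derive (mMl theta omega0 l)).
Proof. intros Ht Hw t Ht'. apply M_C1; auto. Qed.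

Lemma U_deriv theta omega0 lam nl l : thgood theta -> w0good omega0 -> forall w,
  is_derive (ul theta omega0 lam nl l) w (u1l theta omega0 lam nl l w).
Proof.
  intros Ht Hw w. unfold ul, u1l. destruct (M_pi theta omega0 l Ht Hw).
  apply usum_deriv_eq; auto. apply M_C1on; auto.
Qed.

Lemma usum_cont lam n f w : continuous (usum lam n f) w.
Proof. apply (ex_derive_continuous (V:=R_NormedModule)). eexists. apply usum_deriv. Qed.

Lemma alpha_bound theta omega0 lam nl l : thgood theta -> w0good omega0 -> forall w, -PI <= w <= PI ->
  Rabs (ul theta omega0 lam nl l w - mMl theta omega0 l w) <= alpha theta omega0 lam nl l.
Proof.
  intros Ht Hw w Hx. pose proof PI_RGT_0. unfold alpha. apply (supnorm_ge (-PI) PI (fun w => ul theta omega0 lam nl l w - mMl theta omega0 l w) w); auto.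
  apply cont_bounded. lra. intros t Ht'.
  apply (continuous_minus (V:=R_NormedModule) (ul theta omega0 lam nl l) (mMl theta omega0 l)).
  apply usum_cont. eapply C1on_cont. apply M_C1on; auto. auto.
Qed.

Lemma gamma_bound theta omega0 lam nl l : thgood theta -> w0good omega0 -> forall w, -PI <= w <= PI ->
  Rabs (u1l theta omega0 lam nl l w - Derive (mMl theta omega0 l) w) <= gamma theta omega0 lam nl l.
Proof.
  intros Ht Hw w Hx. pose proof PI_RGT_0. unfold gamma. apply (supnorm_ge (-PI) PI (fun w => u1l theta omega0 lam nl l w - Derive (mMl theta omega0 l) w) w); auto.
  apply cont_bounded. lra. intros t Ht'.
  apply (continuous_minus (V:=R_NormedModule) (u1l theta omega0 lam nl l) (Derive (mMl theta omega0 l))).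
  apply usum_cont. apply M_C1on; auto.
Qed.

Lemma alpha_nonneg theta omega0 lam nl l : 0 <= alpha theta omega0 lam nl l.
Proof. apply supnorm_nonneg. pose proof PI_RGT_0; lra. Qed.
Lemma gamma_nonneg theta omega0 lam nl l : 0 <= gamma theta omega0 lam nl l.
Proof. apply supnorm_nonneg. pose proof PI_RGT_0; lra. Qed.

Lemma pow_abs_le1 x n : Rabs x <= 1 -> Rabs (x ^ n) <= 1.
Proof.
  intros H. rewrite <- RPow_abs. induction n. simpl; lra.
  simpl. pose proof (Rabs_pos x). pose proof (pow_le (Rabs x) n H0).
  replace 1 with (1 * 1) by ring. apply Rmult_le_compat; auto.
Qed.

Lemma Rabs_cos_le x : Rabs (cos x) <= 1.
Proof. apply Rabs_le. apply COS_bound. Qed.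
Lemma Rabs_sin_le x : Rabs (sin x) <= 1.
Proof. apply Rabs_le. apply SIN_bound. Qed.

Lemma usum_red lam n f x : usum lam n f (red2pi x) = usum lam n f x.
Proof.
  destruct (red_dec x) as [z Hz]. unfold usum. f_equal.
  apply (sum_n_m_ext (G:=R_AbelianMonoid)). intros k.
  rewrite Hz at 3 4.
  replace (INR k * (red2pi x + 2 * PI * IZR z)) with (INR k * red2pi x + 2 * PI * IZR (Z.of_nat k * z)).
  rewrite cos_Z, sin_Z. reflexivity.
  rewrite mult_IZR, <- INR_IZR_INZ. ring.
Qed.

Lemma cpow_red x l : cos (red2pi x / 2) ^ (2 * l) = cos (x / 2) ^ (2 * l).
Proof.
  rewrite !pow_mult. f_equal.
  destruct (red_dec x) as [z Hz].
  assert (E : forall u, cos u ^ 2 = (1 + cos (2 * u)) / 2) by (intros u; rewrite cos_2a_cos; field).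
  rewrite !E. replace (2 * (x / 2)) with x by field. replace (2 * (red2pi x / 2)) with (red2pi x) by field.
  rewrite Hz at 2. rewrite cos_Z. reflexivity.
Qed.

Lemma ml_red theta omega0 lam nl l x : ml theta omega0 lam nl l (red2pi x) = ml theta omega0 lam nl l x.
Proof. unfold ml, ul. rewrite usum_red, cpow_red. reflexivity. Qed.

Lemma mM_cM theta omega0 l : thgood theta -> w0good omega0 -> forall y, -PI <= y < PI ->
  mM theta omega0 y = cos (y/2) ^ (2*l) * mMl theta omega0 l y.
Proof.
  intros Ht Hw y Hy. pose proof PI_RGT_0. unfold mMl.
  destruct (Req_dec (cos (y/2)) 0) as [E|E].
  - assert (y = -PI).
    { destruct (Req_dec y (-PI)); auto. exfalso. assert (0 < cos (y/2)) by (apply cos_gt_0; lra). lra. }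
    subst. rewrite mM_eq by lra. rewrite phiM_zero; auto. unfold Rdiv; ring.
    rewrite Rabs_left; unfold w0good in Hw; lra.
  - field. apply pow_nonzero; auto.
Qed.

Lemma M0 theta omega0 l : w0good omega0 -> mMl theta omega0 l 0 = 1.
Proof.
  intros Hw. unfold mMl. rewrite mM_one; auto. replace (0/2) with 0 by field. rewrite cos_0, pow1. field.
  rewrite Rabs_R0. unfold w0good in Hw. pose proof PI_RGT_0. lra.
Qed.

Lemma E1 theta omega0 lam nl l : thgood theta -> w0good omega0 -> 0 < Rabs (ul theta omega0 lam nl l 0) ->
  forall x, Rabs (ml theta omega0 lam nl l x - mM theta omega0 x) <=
     2 * alpha theta omega0 lam nl l / Rabs (ul theta omega0 lam nl l 0).
Proof.
  intros Ht Hw HD x. pose proof PI_RGT_0.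
  assert (HU0 : ul theta omega0 lam nl l 0 <> 0) by (intro E; rewrite E, Rabs_R0 in HD; lra).
  rewrite <- ml_red, <- mM_red. set (y := red2pi x). assert (Hy : -PI <= y < PI) by apply red_range.
  set (U := ul theta omega0 lam nl l). set (M := mMl theta omega0 l). set (A := alpha theta omega0 lam nl l).
  set (c := cos (y/2) ^ (2*l)). set (U0 := U 0).
  assert (H1 : Rabs (U y - M y) <= A) by (apply alpha_bound; auto; lra).
  assert (H2 : Rabs (U0 - 1) <= A) by (unfold U0; rewrite <- (M0 theta omega0 l Hw); apply alpha_bound; auto; lra).
  assert (Hc : Rabs c <= 1) by (apply pow_abs_le1, Rabs_cos_le).
  assert (Hm : Rabs (mM theta omega0 y) <= 1) by (apply mM_bnd; auto).
  assert (E : ml theta omega0 lam nl l y - mM theta omega0 y = (c * (U y - M y) + mM theta omega0 y * (1 - U0)) / U0).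
  { rewrite (mM_cM theta omega0 l Ht Hw y Hy). unfold ml. fold U c U0 M. field. auto. }
  rewrite E. unfold Rdiv. rewrite Rabs_mult, Rabs_Rinv by auto.
  apply Rmult_le_compat_r. apply Rlt_le, Rinv_0_lt_compat; auto.
  eapply Rle_trans. apply Rabs_triang. rewrite !Rabs_mult.
  rewrite Rabs_minus_sym in H2.
  assert (Rabs c * Rabs (U y - M y) <= 1 * A) by (apply Rmult_le_compat; auto using Rabs_pos).
  assert (Rabs (mM theta omega0 y) * Rabs (1 - U0) <= 1 * A) by (apply Rmult_le_compat; auto using Rabs_pos).
  lra.
Qed.

Lemma cpow_deriv l t : is_derive (fun t => cos (t/2) ^ (2*l)) t
   (- (INR (2*l) * cos (t/2) ^ (pred (2*l)) * sin (t/2) / 2)).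
Proof. auto_derive; auto. replace (l + (l + 0))%nat with (2*l)%nat by lia. unfold Rdiv. ring. Qed.

Lemma cpow_deriv_bnd l t : Rabs (- (INR (2*l) * cos (t/2) ^ (pred (2*l)) * sin (t/2) / 2)) <= INR l.
Proof.
  rewrite Rabs_Ropp.
  replace (INR (2*l) * cos (t/2) ^ (pred (2*l)) * sin (t/2) / 2) with
     (INR l * (cos (t/2) ^ (pred (2*l)) * sin (t/2))) by (rewrite mult_INR; simpl; field).
  rewrite Rabs_mult, Rabs_pos_eq by apply pos_INR. rewrite Rabs_mult.
  pose proof (pow_abs_le1 (cos (t/2)) (pred (2*l)) (Rabs_cos_le _)).
  pose proof (Rabs_sin_le (t/2)). pose proof (pos_INR l).
  pose proof (Rabs_pos (cos (t / 2) ^ Init.Nat.pred (2 * l))). pose proof (Rabs_pos (sin (t/2))).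
  assert (Rabs (cos (t / 2) ^ Init.Nat.pred (2 * l)) * Rabs (sin (t / 2)) <= 1).
  { replace 1 with (1*1) by ring. apply Rmult_le_compat; auto. }
  replace (INR l) with (INR l * 1) at 2 by ring. apply Rmult_le_compat_l; auto.
Qed.

Lemma E2 theta omega0 lam nl l : thgood theta -> w0good omega0 -> 0 < Rabs (ul theta omega0 lam nl l 0) ->
  forall x, Rabs x <= omega0 -> Rabs (ml theta omega0 lam nl l x - 1) <=
     (INR l * alpha theta omega0 lam nl l + gamma theta omega0 lam nl l) * Rabs x / Rabs (ul theta omega0 lam nl l 0).
Proof.
  intros Ht Hw HD x Hx. pose proof PI_RGT_0. pose proof Hw as Hw'. unfold w0good in Hw'.
  assert (HU0 : ul theta omega0 lam nl l 0 <> 0) by (intro E; rewrite E, Rabs_R0 in HD; lra).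
  set (U := ul theta omega0 lam nl l) in *. set (M := mMl theta omega0 l).
  set (A := alpha theta omega0 lam nl l). set (G := gamma theta omega0 lam nl l).
  set (U1 := u1l theta omega0 lam nl l). set (DM := Derive M).
  set (h := fun t => cos (t/2) ^ (2*l) * (U t - M t)).
  set (dh := fun t => - (INR (2*l) * cos (t/2) ^ (pred (2*l)) * sin (t/2) / 2) * (U t - M t)
        + cos (t/2) ^ (2*l) * (U1 t - DM t)).
  assert (Hin : forall t, Rabs t <= omega0 -> -PI <= t <= PI).
  { intros t Htt. apply Rabs_le_between in Htt. lra. }
  assert (Hd : forall t, Rabs (t - 0) <= omega0 -> is_derive h t (dh t)).
  { intros t Htt. rewrite Rminus_0_r in Htt. unfold h, dh.
    apply (is_derive_mult (K:=R_AbsRing) (fun t => cos (t/2) ^ (2*l)) (fun t => U t - M t)).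
    apply cpow_deriv.
    apply (is_derive_minus (K:=R_AbsRing) (V:=R_NormedModule) U M).
    apply U_deriv; auto. apply M_C1; auto.
    intros; simpl; unfold mult; simpl; ring. }
  destruct (MVT_cor4 h dh 0 omega0 Hd x) as [c0 [Hc1 Hc2]]. rewrite Rminus_0_r; auto.
  rewrite !Rminus_0_r in Hc1, Hc2.
  rewrite Rminus_0_r in Hc2. assert (Hcx : Rabs c0 <= omega0) by lra.
  assert (Ex : ml theta omega0 lam nl l x - 1 = (h x - h 0) / U 0).
  { unfold h, ml. fold U. replace (0/2) with 0 by field. rewrite cos_0, pow1.
    unfold M. rewrite M0 by auto.
    assert (cos (x/2) ^ (2*l) * mMl theta omega0 l x = 1).
    { rewrite <- mM_cM by (auto; apply Rabs_le_between in Hx; lra). apply mM_one; auto. }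
    field_simplify; auto. rewrite H0. field. auto. }
  rewrite Ex, Hc1. unfold Rdiv. rewrite Rabs_mult, Rabs_mult, Rabs_Rinv by auto.
  apply Rmult_le_compat_r. apply Rlt_le, Rinv_0_lt_compat; auto.
  apply Rmult_le_compat_r. apply Rabs_pos.
  unfold dh. eapply Rle_trans. apply Rabs_triang. rewrite !Rabs_mult.
  assert (B1 : Rabs (U c0 - M c0) <= A) by (apply alpha_bound; auto).
  assert (B2 : Rabs (U1 c0 - DM c0) <= G) by (apply gamma_bound; auto).
  pose proof (cpow_deriv_bnd l c0). pose proof (pow_abs_le1 (cos (c0/2)) (2*l) (Rabs_cos_le _)).
  pose proof (Rabs_pos (U c0 - M c0)). pose proof (Rabs_pos (U1 c0 - DM c0)).
  assert (Rabs (- (INR (2 * l) * cos (c0 / 2) ^ Init.Nat.pred (2 * l) * sin (c0 / 2) / 2)) * Rabs (U c0 - M c0) <= INR l * A).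
  { apply Rmult_le_compat; auto using Rabs_pos. }
  assert (Rabs (cos (c0 / 2) ^ (2 * l)) * Rabs (U1 c0 - DM c0) <= 1 * G).
  { apply Rmult_le_compat; auto using Rabs_pos. }
  lra.
Qed.

Lemma inv2pow_S n : / 2 ^ S n = / 2 ^ n / 2.
Proof. rewrite <- tech_pow_Rmult. field. apply pow_nonzero; lra. Qed.
Lemma inv2pow_pos n : 0 < / 2 ^ n.
Proof. apply Rinv_0_lt_compat, pow2_pos. Qed.
Lemma inv2pow_le1 n : / 2 ^ n <= 1.
Proof.
  induction n. simpl; lra. rewrite inv2pow_S. pose proof (inv2pow_pos n). lra.
Qed.

Lemma tail_bound (e : nat -> R) r : 0 <= r <= 1/4 -> (forall i, Rabs (e (S i) - 1) <= r * / 2 ^ i) ->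
  forall n, Rabs (pprod e n - 1) <= 4 * r * (1 - / 2 ^ n).
Proof.
  intros Hr He n. induction n.
  - simpl. rewrite Rinv_1. replace (1 - 1) with 0 by ring. rewrite Rabs_R0. lra.
  - simpl pprod. rewrite inv2pow_S. specialize (He n).
    set (P := pprod e n) in *. set (x := e (S n)) in *. set (u := / 2 ^ n) in *.
    pose proof (inv2pow_pos n). pose proof (inv2pow_le1 n). fold u in H, H0.
    replace (P * x - 1) with ((P - 1) * x + (x - 1)) by ring.
    eapply Rle_trans. apply Rabs_triang. rewrite Rabs_mult.
    assert (Hx : Rabs x <= 1 + r * u).
    { replace x with ((x - 1) + 1) by ring. eapply Rle_trans. apply Rabs_triang. rewrite Rabs_R1. lra. }
    assert (Rabs (P - 1) * Rabs x <= 4 * r * (1 - u) * (1 + r * u)).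
    { apply Rmult_le_compat; auto using Rabs_pos. }
    assert (4 * r * (1 - u) * (1 + r * u) <= 4 * r * (1 - u) + r * u).
    { assert (Ht : 0 <= r * u) by (apply Rmult_le_pos; lra).
      assert (Hs : 0 <= 4 * r * (1 - u) <= 1).
      { split. apply Rmult_le_pos; lra. lra. }
      assert (4 * r * (1 - u) * (r * u) <= 1 * (r * u)) by (apply Rmult_le_compat_r; lra).
      lra. }
    lra.
Qed.

Lemma tail_step (e : nat -> R) r : 0 <= r <= 1/4 -> (forall i, Rabs (e (S i) - 1) <= r * / 2 ^ i) ->
  forall n, Rabs (pprod e (S n) - pprod e n) <= 2 * r * / 2 ^ n.
Proof.
  intros Hr He n. pose proof (tail_bound e r Hr He n). simpl pprod.
  replace (pprod e n * e (S n) - pprod e n) with (pprod e n * (e (S n) - 1)) by ring.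
  rewrite Rabs_mult. pose proof (inv2pow_pos n). pose proof (inv2pow_le1 n).
  assert (Rabs (pprod e n) <= 2).
  { replace (pprod e n) with ((pprod e n - 1) + 1) by ring. eapply Rle_trans. apply Rabs_triang.
    rewrite Rabs_R1. nra. }
  replace (2 * r * / 2 ^ n) with (2 * (r * / 2 ^ n)) by ring.
  apply Rmult_le_compat; auto using Rabs_pos.
Qed.

Lemma tail_diff (e : nat -> R) r : 0 <= r <= 1/4 -> (forall i, Rabs (e (S i) - 1) <= r * / 2 ^ i) ->
  forall n p, Rabs (pprod e (n + p) - pprod e n) <= 4 * r * (/ 2 ^ n - / 2 ^ (n + p)).
Proof.
  intros Hr He n p. induction p.
  - rewrite Nat.add_0_r. rewrite Rminus_eq_0, Rabs_R0. lra.
  - replace (n + S p)%nat with (S (n + p)) by lia.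
    replace (pprod e (S (n + p)) - pprod e n) with
      ((pprod e (S (n + p)) - pprod e (n + p)) + (pprod e (n + p) - pprod e n)) by ring.
    eapply Rle_trans. apply Rabs_triang.
    pose proof (tail_step e r Hr He (n + p)). rewrite inv2pow_S. lra.
Qed.

Lemma tail_conv (e : nat -> R) r : 0 <= r <= 1/4 -> (forall i, Rabs (e (S i) - 1) <= r * / 2 ^ i) ->
  exists L : R, is_lim_seq (pprod e) L /\ Rabs (L - 1) <= 4 * r.
Proof.
  intros Hr He.
  assert (Hc : ex_finite_lim_seq (pprod e)).
  { apply ex_lim_seq_cauchy_corr. intros eps.
    assert (Hy : 0 < eps / (4 * r + 1)) by (apply Rdiv_lt_0_compat; [apply cond_pos | lra]).
    assert (Hh : Rabs (/2) < 1) by (rewrite Rabs_pos_eq; lra).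
    destruct (pow_lt_1_zero (/2) Hh (eps / (4 * r + 1)) Hy) as [N HN].
    exists N. intros n m Hn Hm.
    assert (Hgen : forall n m, (N <= n)%nat -> (n <= m)%nat -> Rabs (pprod e n - pprod e m) < eps).
    { clear n m Hn Hm. intros n m Hn Hnm. replace m with (n + (m - n))%nat by lia.
      rewrite Rabs_minus_sym. eapply Rle_lt_trans. apply (tail_diff e r Hr He).
      pose proof (inv2pow_pos (n + (m - n))).
      specialize (HN n Hn). rewrite pow_inv, Rabs_pos_eq in HN by (apply Rlt_le, inv2pow_pos).
      apply Rmult_lt_compat_r with (r := 4 * r + 1) in HN; [|lra].
      unfold Rdiv in HN. rewrite Rmult_assoc, Rinv_l, Rmult_1_r in HN by lra.
      pose proof (inv2pow_pos n). nra. }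
    destruct (Nat.le_ge_cases n m). apply Hgen; auto.
    rewrite Rabs_minus_sym. apply Hgen; auto. }
  destruct Hc as [L HL]. exists L. split; auto.
  assert (H1 : is_lim_seq (fun n => Rabs (pprod e n - 1)) (Rabs (L - 1))).
  { apply (is_lim_seq_abs _ (L - 1)). apply is_lim_seq_minus'; auto. apply is_lim_seq_const. }
  assert (H2 := is_lim_seq_le _ _ _ _ (fun n => Rle_trans _ _ _ (tail_bound e r Hr He n)
     (ltac:(pose proof (inv2pow_pos n); nra) : 4 * r * (1 - / 2 ^ n) <= 4 * r)) H1 (is_lim_seq_const (4 * r))).
  simpl in H2. auto.
Qed.

Lemma pprod_split g J n : pprod g (n + J) = pprod g J * pprod (fun i => g (J + i)%nat) n.
Proof.
  induction n. simpl. ring.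
  replace (S n + J)%nat with (S (n + J)) by lia. simpl pprod. rewrite IHn.
  replace (S (n + J)) with (J + S n)%nat by lia. ring.
Qed.

Lemma pprod_bnd a n : (forall j, Rabs (a j) <= 2) -> Rabs (pprod a n) <= 2 ^ n.
Proof.
  intros Ha. induction n. simpl. rewrite Rabs_R1; lra.
  simpl pprod. rewrite Rabs_mult. simpl. rewrite Rmult_comm.
  apply Rmult_le_compat; auto using Rabs_pos.
Qed.

Lemma prod_diff a b n e : (forall j, Rabs (a j) <= 2) -> (forall j, Rabs (b j) <= 2) ->
  (forall j, Rabs (a j - b j) <= e) -> Rabs (pprod a n - pprod b n) <= INR n * 2 ^ n * e.
Proof.
  intros Ha Hb Hab. induction n.
  - simpl. rewrite Rminus_eq_0, Rabs_R0. lra.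
  - simpl pprod.
    replace (pprod a n * a (S n) - pprod b n * b (S n)) with
      ((pprod a n - pprod b n) * a (S n) + pprod b n * (a (S n) - b (S n))) by ring.
    eapply Rle_trans. apply Rabs_triang. rewrite !Rabs_mult.
    pose proof (pprod_bnd b n Hb). pose proof (pos_INR n). pose proof (pow2_pos n).
    assert (He : 0 <= e) by (eapply Rle_trans; [apply Rabs_pos | apply (Hab O)]).
    assert (Rabs (pprod a n - pprod b n) * Rabs (a (S n)) <= (INR n * 2 ^ n * e) * 2)
      by (apply Rmult_le_compat; auto using Rabs_pos).
    assert (Rabs (pprod b n) * Rabs (a (S n) - b (S n)) <= 2 ^ n * e)
      by (apply Rmult_le_compat; auto using Rabs_pos).
    rewrite S_INR. simpl. nra.
Qed.

Lemma pow2_unbounded x : exists n, x <= 2 ^ n.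
Proof.
  destruct (Pow_x_infinity 2 ltac:(rewrite Rabs_pos_eq; lra) x) as [N HN].
  exists N. specialize (HN N (le_n N)). rewrite Rabs_pos_eq in HN by (apply Rlt_le, pow2_pos). lra.
Qed.

Theorem lemma3
  (theta : R -> R) (omega0 : R) (lam : nat -> nat -> R) (nl : nat -> nat) (l0 : nat)
  (* theta odd, non-decreasing, C^2, equal to pi/4 beyond pi/3 *)
  (Hodd : forall x, theta (- x) = - theta x)
  (Hmono : forall x y, x <= y -> theta x <= theta y)
  (Hd1 : forall x, ex_derive theta x)
  (Hd2 : forall x, ex_derive (Derive theta) x)
  (Hd2c : forall x, continuous (Derive (Derive theta)) x)
  (Hflat : forall x, x > PI / 3 -> theta x = PI / 4)
  (Hw0 : PI / 3 <= omega0 < PI / 2)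
  (* standing assumptions on the summation method *)
  (Halpha : is_lim_seq (fun l => INR l * alpha theta omega0 lam nl l) 0)
  (Hgamma : is_lim_seq (fun l => gamma theta omega0 lam nl l) 0)
  (Hpi : forall l, ul theta omega0 lam nl l PI <> 0)
  (Hl0 : exists delta, 0 < delta /\
           forall l, (l0 <= l)%nat -> delta <= Rabs (ul theta omega0 lam nl l 0)) :
  forall a b, a < b ->
    exists C, exists L, forall l, (L <= l)%nat -> (l0 <= l)%nat ->
      forall w, a <= w <= b ->
        Rabs (phil theta omega0 lam nl l w - phiM theta omega0 w)
          <= C * mu theta omega0 lam nl l.
Proof.
  intros a b Hab.
  assert (Ht : thgood theta) by (repeat split; auto).
  assert (Hw : w0good omega0) by (unfold w0good; auto).
  pose proof PI_RGT_0 as HPI.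
  assert (Hom : 0 < omega0) by lra.
  destruct Hl0 as [delta [Hdel Hdl]].
  assert (Hmu : is_lim_seq (mu theta omega0 lam nl) 0).
  { unfold mu. replace (Finite 0) with (Finite (0 + 0)) by (f_equal; ring).
    apply is_lim_seq_plus'; auto. }
  set (eps := Rmin (delta / (4 * omega0)) (delta / 2)).
  assert (Heps : 0 < eps).
  { unfold eps. apply Rmin_glb_lt; apply Rdiv_lt_0_compat; lra. }
  apply is_lim_seq_spec in Hmu. destruct (Hmu (mkposreal eps Heps)) as [L1 HL1]. simpl in HL1.
  destruct (pow2_unbounded (Rmax (Rabs a) (Rabs b) / omega0)) as [J0 HJ0].
  assert (HB : forall w, a <= w <= b -> Rabs w <= omega0 * 2 ^ J0).
  { intros w Hw'. apply Rmult_le_reg_r with (/ omega0). apply Rinv_0_lt_compat; auto.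
    replace (omega0 * 2 ^ J0 * / omega0) with (2 ^ J0) by (field; lra).
    eapply Rle_trans; [|apply HJ0]. unfold Rdiv. apply Rmult_le_compat_r.
    apply Rlt_le, Rinv_0_lt_compat; auto.
    unfold Rabs, Rmax; repeat destruct Rcase_abs; repeat destruct Rle_dec; lra. }
  exists ((2 ^ J0 * 4 * omega0 + INR J0 * 2 ^ J0 * 2) / delta), (Nat.max L1 1).
  intros l HL Hl0' w Hwab.
  set (U := ul theta omega0 lam nl l) in *.
  set (A := alpha theta omega0 lam nl l). set (G := gamma theta omega0 lam nl l).
  set (mul := mu theta omega0 lam nl l).
  assert (HmuA : mul = INR l * A + G) by reflexivity.
  pose proof (alpha_nonneg theta omega0 lam nl l) as HA0. fold A in HA0.
  pose proof (gamma_nonneg theta omega0 lam nl l) as HG0. fold G in HG0.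
  assert (Hl1 : 1 <= INR l) by (apply (le_INR 1); lia).
  assert (HAmu : A <= mul) by nra.
  assert (Hmul : mul < eps).
  { specialize (HL1 l ltac:(lia)). rewrite Rminus_0_r in HL1. fold mul in HL1.
    apply Rabs_def2 in HL1. lra. }
  assert (He1 : eps <= delta / (4 * omega0)) by apply Rmin_l.
  assert (He2 : eps <= delta / 2) by apply Rmin_r.
  set (D := Rabs (U 0)).
  assert (HD : delta <= D) by (apply Hdl; auto).
  assert (HD0 : 0 < D) by lra.
  set (g := fun j => ml theta omega0 lam nl l (w / 2 ^ j)).
  set (q := fun j => mM theta omega0 (w / 2 ^ j)).
  set (r := mul * omega0 / D).
  assert (Hr : 0 <= r <= 1/4).
  { unfold r. split. apply Rmult_le_pos. apply Rmult_le_pos; lra. apply Rlt_le, Rinv_0_lt_compat; auto.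
    apply Rmult_le_reg_r with D; auto. unfold Rdiv. rewrite Rmult_assoc, Rinv_l by lra.
    assert (mul < delta / (4 * omega0)) by lra.
    assert (mul * (4 * omega0) < delta).
    { apply Rmult_lt_reg_r with (/ (4 * omega0)). apply Rinv_0_lt_compat; lra.
      rewrite Rmult_assoc, Rinv_r, Rmult_1_r by lra. auto. }
    lra. }
  set (e := fun i => g (J0 + i)%nat).
  assert (Hebnd : forall i, Rabs (e (S i) - 1) <= r * / 2 ^ i).
  { intros i. unfold e, g.
    assert (Hx : Rabs (w / 2 ^ (J0 + S i)) <= omega0 * / 2 ^ S i).
    { rewrite Rabs_div by (apply pow_nonzero; lra). rewrite (Rabs_pos_eq (2 ^ _)) by (apply Rlt_le, pow2_pos).
      rewrite pow_add. unfold Rdiv. rewrite Rinv_mult.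
      pose proof (HB w Hwab). pose proof (pow2_pos J0). pose proof (inv2pow_pos (S i)).
      replace (Rabs w * (/ 2 ^ J0 * / 2 ^ S i)) with ((Rabs w * / 2 ^ J0) * / 2 ^ S i) by ring.
      apply Rmult_le_compat_r; try lra.
      apply Rmult_le_reg_r with (2 ^ J0); auto. rewrite Rmult_assoc, Rinv_l by lra. lra. }
    assert (Hx2 : omega0 * / 2 ^ S i <= omega0) by
      (pose proof (inv2pow_le1 (S i)); pose proof (inv2pow_pos (S i)); nra).
    eapply Rle_trans. apply E2; auto; try lra. fold U D A G. rewrite <- HmuA.
    rewrite inv2pow_S in Hx. pose proof (inv2pow_pos i).
    unfold r, Rdiv. apply Rmult_le_reg_r with D; auto.
    rewrite !Rmult_assoc, Rinv_l by lra.
    assert (mul * Rabs (w / 2 ^ (J0 + S i)) <= mul * (omega0 * / 2 ^ i / 2)).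
    { apply Rmult_le_compat_l; lra. }
    assert (0 <= mul * (omega0 * / 2 ^ i)) by (apply Rmult_le_pos; [lra|]; apply Rmult_le_pos; lra).
    replace (mul * (Rabs (w * / 2 ^ (J0 + S i)) * 1)) with (mul * Rabs (w / 2 ^ (J0 + S i))) by (unfold Rdiv; ring).
    replace (mul * (omega0 * (/ D * (/ 2 ^ i * D)))) with (mul * (omega0 * / 2 ^ i)) by (field; repeat split; try lra; apply pow_nonzero; lra).
    assert (mul * (omega0 * / 2 ^ i / 2) = (mul * (omega0 * / 2 ^ i)) / 2) by (field; apply pow_nonzero; lra).
    lra. }
  destruct (tail_conv e r Hr Hebnd) as [Lt [HLt HLt1]].
  set (P := pprod g J0). set (Q := pprod q J0).
  assert (Hlim : is_lim_seq (pprod g) (P * Lt)).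
  { apply (is_lim_seq_incr_n _ J0).
    apply is_lim_seq_ext with (fun n => P * pprod e n).
    intros n. unfold P, e. rewrite pprod_split. reflexivity.
    replace (Finite (P * Lt)) with (Rbar_mult P Lt) by reflexivity. apply (is_lim_seq_scal_l _ P Lt). auto. }
  assert (Hphil : phil theta omega0 lam nl l w = P * Lt).
  { unfold phil. fold U. change (fun N => pprod (fun j => ml theta omega0 lam nl l (w / 2 ^ j)) N) with (pprod g).
    rewrite (is_lim_seq_unique _ _ Hlim). reflexivity. }
  assert (HQ : phiM theta omega0 w = Q).
  { unfold Q, q. symmetry. apply phiM_prod_eq; auto. pose proof (HB w Hwab). pose proof (pow2_pos J0). nra. }
  rewrite Hphil, HQ.
  assert (HgQ : forall j, Rabs (g j - q j) <= 2 * A / D).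
  { intros j. unfold g, q. apply E1; auto. }
  assert (H2AD : 2 * A / D <= 1).
  { apply Rmult_le_reg_r with D; auto. unfold Rdiv. rewrite Rmult_assoc, Rinv_l by lra. lra. }
  assert (Hqb : forall j, Rabs (q j) <= 1) by (intros; unfold q; apply mM_bnd; auto).
  assert (Hqb2 : forall j, Rabs (q j) <= 2) by (intros j; specialize (Hqb j); lra).
  assert (Hgb : forall j, Rabs (g j) <= 2).
  { intros j. replace (g j) with ((g j - q j) + q j) by ring. eapply Rle_trans. apply Rabs_triang.
    specialize (HgQ j). specialize (Hqb j). lra. }
  pose proof (pprod_bnd g J0 Hgb) as HPb. fold P in HPb.
  pose proof (prod_diff g q J0 _ Hgb Hqb2 HgQ) as HPQ. fold P Q in HPQ.
  replace (P * Lt - Q) with (P * (Lt - 1) + (P - Q)) by ring.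
  eapply Rle_trans. apply Rabs_triang. rewrite Rabs_mult.
  assert (T1 : Rabs P * Rabs (Lt - 1) <= 2 ^ J0 * (4 * r)) by (apply Rmult_le_compat; auto using Rabs_pos).
  assert (Hinv : / D <= / delta) by (apply Rinv_le_contravar; lra).
  assert (T2 : 2 ^ J0 * (4 * r) <= 2 ^ J0 * 4 * omega0 * mul / delta).
  { unfold r. pose proof (pow2_pos J0). unfold Rdiv.
    replace (2 ^ J0 * (4 * (mul * omega0 * / D))) with ((2 ^ J0 * 4 * omega0 * mul) * / D) by ring.
    apply Rmult_le_compat_l; auto. apply Rmult_le_pos; try lra. apply Rmult_le_pos; lra. }
  assert (T3 : INR J0 * 2 ^ J0 * (2 * A / D) <= INR J0 * 2 ^ J0 * 2 * mul / delta).
  { pose proof (pow2_pos J0). pose proof (pos_INR J0). unfold Rdiv.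
    replace (INR J0 * 2 ^ J0 * (2 * A * / D)) with ((INR J0 * 2 ^ J0 * 2) * (A * / D)) by ring.
    replace (INR J0 * 2 ^ J0 * 2 * mul * / delta) with ((INR J0 * 2 ^ J0 * 2) * (mul * / delta)) by ring.
    apply Rmult_le_compat_l. nra.
    apply Rmult_le_compat; auto. apply Rlt_le, Rinv_0_lt_compat; auto. }
  assert (Heq : (2 ^ J0 * 4 * omega0 + INR J0 * 2 ^ J0 * 2) / delta * mul =
     2 ^ J0 * 4 * omega0 * mul / delta + INR J0 * 2 ^ J0 * 2 * mul / delta) by (field; lra).
  fold mul. rewrite Heq. lra.
Qed.
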